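(* Let $(p,f)$ be an SCF-RT rationalizable within the class of all RUM-CFs, and let $x,y\in X$. If $(x,y)\in T(R^{rt})$, then every RUM-CF $(u,g,r)$ rationalizing $(p,f)$ satisfies $u(x)\geq u(y)$. If $(x,y)\in T_P(R^{rt})$, then every such model satisfies $u(x)>u(y)$.
   Context: $X$ is a finite set of options; $C=\{(x,y): x,y\in X,\ x\neq y\}$; $D\subseteq C$ is a fixed non-empty set with $(x,y)\in D\Rightarrow (y,x)\in D$. An SCF $p$ assigns to each $(x,y)\in D$ a number $p(x,y)>0$ with $p(x,y)+p(y,x)=1$. An SCF-RT is a pair $(p,f)$ where $p$ is an SCF and $f$ assigns to each $(x,y)\in D$ a strictly positive density $f(x,y)$ on $\mathbb{R}^+$ with cdf $F(x,y)$. A RUM is a pair $(u,g)$ with $u:X\to\mathbb{R}$ and $g$ assigning to each $(x,y)\in C$ a density $g(x,y)$ on $\mathbb{R}$ (cdf $G(x,y)$) with $\int v\,g(x,y)(v)\,dv=u(x)-u(y)$, $g(x,y)(v)=g(y,x)(-v)$ for all $v$, and connected support. A RUM-CF is $(u,g,r)$ with $(u,g)$ a RUM and $r:\mathbb{R}^{++}\to\mathbb{R}^+$ continuous, strictly decreasing where $r(v)>0$, $\lim_{v\to0}r(v)=\infty$, $\lim_{v\to\infty}r(v)=0$; $r^{-1}(t)$ ($t>0$) is the inverse of $r$ restricted to $\{r>0\}$. It rationalizes $(p,f)$ if for all $(x,y)\in D$: $G(x,y)(0)=p(y,x)$ and $\frac{1-G(x,y)(r^{-1}(t))}{1-G(x,y)(0)}=F(x,y)(t)$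 for all $t>0$. For cdfs $G,H$ on $\mathbb{R}^+$ and $q>0$, $G$ $q$-FSD $H$ means $G(t)\leq qH(t)$ for all $t\geq0$. The binary relation $R^{rt}$ on $X$: $(x,y)\in R^{rt}$ iff either $x=y$, or $(x,y)\in D$ and $F(y,x)$ $q$-FSD $F(x,y)$ with $q=p(x,y)/p(y,x)$. For a binary relation $R$ on $X$, $T(R)$ is its transitive closure ($(x,y)\in T(R)$ iff there is a sequence $x_1=x,x_2,\dots,x_n=y$, $n\geq2$, with $(x_k,x_{k+1})\in R$ for all $k$), and $T_P(R)$ is the asymmetric part of $T(R)$: $(x,y)\in T_P(R)$ iff $(x,y)\in T(R)$ and $(y,x)\notin T(R)$. *)

(* Defs.v *)
From HB Require Import structures.
From mathcomp Require Import all_boot all_order all_algebra.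
From mathcomp Require Import all_classical all_reals all_analysis.
From Stdlib Require Import Relations.
Set Implicit Arguments. Unset Strict Implicit. Unset Printing Implicit Defensive.
Import Order.TTheory GRing.Theory Num.Theory.
Import numFieldNormedType.Exports.
Local Open Scope classical_set_scope.
Local Open Scope ring_scope.

Section Defs.
Variable R : realType.
Let mu := @lebesgue_measure R.

Definition pos_density_Rplus (h : R -> R) : Prop :=
  measurable_fun setT h /\ (forall t, 0 <= t -> 0 < h t) /\
  (\int[mu]_(t in `[0%R, +oo[) (h t)%:E = 1)%E.

Definition cdf_Rplus (h : R -> R) (t : R) : R := Rintegral mu `[(0:R), t] h.

Definition density_R (h : R -> R) : Prop :=
  measurable_fun setT h /\ (forall v, 0 <= h v) /\
  (\int[mu]_(v in setT) (h v)%:E = 1)%E.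

Definition cdf_R (h : R -> R) (v : R) : R := Rintegral mu `]-oo, v] h.

Definition dsupport (h : R -> R) : set R := closure [set v | 0 < h v].

Section Choice.
Variable X : finType.

Definition wf_domain (D : rel X) : Prop :=
  (exists x y, D x y) /\ (forall x y, D x y -> x != y) /\
  (forall x y, D x y -> D y x).

Definition is_SCF (D : rel X) (p : X -> X -> R) : Prop :=
  forall x y, D x y -> 0 < p x y /\ p x y + p y x = 1.

Definition is_SCFRT (D : rel X) (p : X -> X -> R) (f : X -> X -> R -> R) : Prop :=
  is_SCF D p /\ forall x y, D x y -> pos_density_Rplus (f x y).

Definition is_RUM (u : X -> R) (g : X -> X -> R -> R) : Prop :=
  forall x y, x != y ->
    [/\ density_R (g x y),
        mu.-integrable setT (fun v => (v * g x y v)%:E),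
        Rintegral mu setT (fun v => v * g x y v) = u x - u y,
        (forall v, g x y v = g y x (- v)) &
        connected (dsupport (g x y))].

Definition is_CF (r : R -> R) : Prop :=
  [/\ (forall v, 0 < v -> {for v, continuous r}),
      (forall v, 0 < v -> 0 <= r v),
      (forall v w, 0 < v -> v < w -> 0 < r v -> 0 < r w -> r w < r v),
      (r x @[x --> 0^'+] --> +oo) &
      (r x @[x --> +oo] --> 0)].

(* (u,g,r) rationalizes (p,f); r^{-1}(t) is the v > 0 with r v = t *)
Definition rationalizes (D : rel X) (p : X -> X -> R) (f : X -> X -> R -> R)
    (u : X -> R) (g : X -> X -> R -> R) (r : R -> R) : Prop :=
  [/\ is_RUM u g, is_CF r &
      forall x y, D x y ->
        cdf_R (g x y) 0 = p y x /\
        (forall t v, 0 < t -> 0 < v -> r v = t ->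
           (1 - cdf_R (g x y) v) / (1 - cdf_R (g x y) 0) = cdf_Rplus (f x y) t)].

Definition rationalizable (D : rel X) (p : X -> X -> R) (f : X -> X -> R -> R) : Prop :=
  exists u g r, rationalizes D p f u g r.

Definition qFSD (q : R) (G H : R -> R) : Prop := forall t, 0 <= t -> G t <= q * H t.

Definition Rrt (D : rel X) (p : X -> X -> R) (f : X -> X -> R -> R) (x y : X) : Prop :=
  x = y \/
  (D x y /\ qFSD (p x y / p y x) (cdf_Rplus (f y x)) (cdf_Rplus (f x y))).

Definition T (Q : X -> X -> Prop) : X -> X -> Prop := clos_trans X Q.
Definition TP (Q : X -> X -> Prop) (x y : X) : Prop := T Q x y /\ ~ T Q y x.
End Choice.
End Defs.

(* Main.v *)
Require Import Defs.
From HB Require Import structures.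
From mathcomp Require Import all_boot all_order all_algebra.
From mathcomp Require Import all_classical all_reals all_analysis.
From mathcomp Require Import measurable_realfun lebesgue_measure lebesgue_integral ftc charge.
From mathcomp Require Import lra ring.
From Stdlib Require Import Relations.
Set Implicit Arguments. Unset Strict Implicit. Unset Printing Implicit Defensive.
Import Order.TTheory GRing.Theory Num.Theory.
Import numFieldNormedType.Exports.
Local Open Scope classical_set_scope.
Local Open Scope ring_scope.

Section Ton.
Context {R : realType}.
Local Notation mu := (@lebesgue_measure R).

Lemma tonelli (g : R -> R) : measurable_fun [set: R] g -> (forall s, 0 <= g s) ->
  (\int[mu]_(s in `[0%R, +oo[) (s * g s)%:E =
   \int[mu]_(v in `[0%R, +oo[) \int[mu]_(s in `]v, +oo[) (g s)%:E)%E.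
Proof.
move=> mg g0.
pose A := [set p : R * R | 0 <= p.2 /\ p.2 < p.1].
have mA : measurable A.
  pose fsnd (p : R * R) := (0 <= p.2)%R.
  pose f21 (p : R * R) := (p.2 < p.1)%R.
  rewrite [X in measurable X](_ : _ =
      fsnd @^-1` [set true] `&` f21 @^-1` [set true]); last first.
    apply/seteqP; split => p /=; rewrite /fsnd /f21 /A /=. by []. by [].
  apply: measurableI.
  - have : measurable_fun setT fsnd by exact: measurable_fun_ler.
    by move=> /(_ measurableT [set true]); rewrite setTI; exact.
  - have : measurable_fun setT f21 by exact: measurable_fun_ltr.
    by move=> /(_ measurableT [set true]); rewrite setTI; exact.
pose F (p : R * R) := ((\1_A p * g p.1)%:E)%E.
have mF : measurable_fun setT F.
  apply/measurable_EFinP/measurable_funM; first exact: measurable_indic.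
  exact: measurableT_comp.
have F0 p : (0 <= F p)%E.
  by rewrite /F lee_fin mulr_ge0 // indicE.
have FT := @fubini_tonelli _ _ _ _ R mu mu F mF F0.
have indA s v : \1_A (s, v) = \1_`[0%R, s[ v :> R.
  rewrite !indicE; suff -> : ((s, v) \in A) = (v \in `[0%R, s[%classic) by [].
  apply/idP/idP.
  - by move=> /set_mem [h1 h2]; apply: mem_set; rewrite /= in_itv /= h1 h2.
  - by move=> /set_mem; rewrite /= in_itv /= => /andP[h1 h2]; apply: mem_set.
transitivity (\int[mu]_x \int[mu]_y F (x, y))%E.
  rewrite integral_mkcond; apply: eq_integral => s _ /=.
  under eq_integral => v _ do rewrite /F indA /= EFinM.
  rewrite ge0_integralZr //=; [|exact/measurable_EFinP/measurable_indic|by rewrite lee_fin].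
  rewrite integral_indic //= setIT lebesgue_measure_itv /= patchE lte_fin.
  case: (leP 0 s) => s0.
  - rewrite mem_set /=; last by rewrite in_itv /= s0.
    move: s0; rewrite le_eqVlt => /orP[/eqP <-|s0]; first by rewrite ltxx mul0r mul0e.
    by rewrite s0 oppr0 adde0 EFinM.
  - rewrite ifF; last by apply: memNset; rewrite /= in_itv /= leNgt s0.
    by rewrite ltNge (ltW s0) /= mul0e.
rewrite FT [RHS]integral_mkcond; apply: eq_integral => v _ /=.
rewrite patchE.
case: (leP 0 v) => v0.
- rewrite mem_set /=; last by rewrite in_itv /= v0.
  rewrite [RHS]integral_mkcond; apply: eq_integral => s _ /=.
  rewrite /F indA /= patchE indicE.
  case: (ltP v s) => vs.
  + rewrite mem_set; last by rewrite /= in_itv /= v0 vs.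
    by rewrite ifT ?mul1r //; apply: mem_set; rewrite /= in_itv /= vs.
  + rewrite ifF; last by apply: memNset; rewrite /= in_itv /= andbT ltNge vs.
    rewrite memNset ?mul0r //.
    by rewrite /= in_itv /= ltNge vs andbF.
- rewrite memNset /=; last by rewrite in_itv /= leNgt v0.
  apply: integral0_eq => s _; rewrite /F indA indicE memNset ?mul0r //=.
  by rewrite in_itv /= leNgt v0.
Qed.

Lemma reflect_int (h : R -> R) : measurable_fun [set: R] h -> (forall s, 0 <= h s) ->
  (\int[mu]_(s in `]-oo, 0%R]) ((- s) * h s)%:E =
   \int[mu]_(s in `[0%R, +oo[) (s * h (- s))%:E)%E.
Proof.
move=> mh h0.
pose f (r : R) := ((Num.max r 0) * h (- r))%:E.
have mf : measurable_fun [set: R] f.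
  apply/measurable_EFinP/measurable_funM.
  - by apply: measurable_maxr.
  - by apply: measurableT_comp.
have f0 r : (0 <= f r)%E by rewrite /f lee_fin mulr_ge0 // le_max lexx orbT.
have := ge0_integration_by_substitution0 mf f0.
have -> : (\int[mu]_(r in `[0%R, +oo[) f r = \int[mu]_(s in `[0%R, +oo[) (s * h (- s))%:E)%E.
  apply: eq_integral => r; rewrite inE /= in_itv /= andbT => r0.
  by rewrite /f max_l.
move=> ->; apply: eq_integral => r; rewrite inE /= in_itv /= => r0.
by rewrite /f opprK max_l // oppr_ge0.
Qed.


End Ton.

Section Ana.
Context {R : realType}.
Local Notation mu := (@lebesgue_measure R).

Definition tl (g : R -> R) (v : R) : \bar R :=
  (\int[mu]_(s in `]v, +oo[) (g s)%:E)%E.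

Lemma setU_rays (v : R) : `]-oo, v] `|` `]v, +oo[ = [set: R].
Proof.
apply/seteqP; split => // s _ /=; rewrite !in_itv /=.
by case: (leP s v) => _; [left|right].
Qed.

Lemma disj_rays (v : R) : [disjoint `]-oo, v] & `]v, +oo[].
Proof.
apply/disj_setPS => s [] /=; rewrite !in_itv /= andbT => h1 h2.
by move: (lt_le_trans h2 h1); rewrite ltxx.
Qed.

Variable g : R -> R.
Hypothesis hg : density_R g.

Lemma mg : measurable_fun [set: R] (EFin \o g).
Proof. by case: hg => m _; apply/measurable_EFinP. Qed.

Lemma g0 s : (0 <= (g s)%:E)%E.
Proof. by case: hg => _ [h _]; rewrite lee_fin. Qed.

Lemma split_int (v : R) :
  (\int[mu]_(s in `]-oo, v]) (g s)%:E + tl g v = 1)%E.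
Proof.
case: hg => _ [_ h1]; rewrite -h1 -(setU_rays v) ge0_integral_setU //.
- by rewrite setU_rays; exact: mg.
- by move=> *; exact: g0.
- exact: disj_rays.
Qed.

Lemma int_le1 (A : set R) : measurable A ->
  (0 <= \int[mu]_(s in A) (g s)%:E <= 1)%E.
Proof.
move=> mA; apply/andP; split; first by apply: integral_ge0 => *; exact: g0.
case: hg => _ [_ h1]; rewrite -h1; apply: ge0_subset_integral => //.
- exact: mg.
- by move=> *; exact: g0.
Qed.

Lemma int_fin (A : set R) : measurable A ->
  (\int[mu]_(s in A) (g s)%:E \is a fin_num)%E.
Proof.
move=> mA; have /andP[h0 h1] := int_le1 mA.
by rewrite ge0_fin_numE // (le_lt_trans h1) // ltry.
Qed.

Lemma cdfE (v : R) : (cdf_R g v)%:E = (\int[mu]_(s in `]-oo, v]) (g s)%:E)%E.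
Proof. by rewrite /cdf_R /Rintegral fineK //; exact: int_fin. Qed.

Lemma tlE (v : R) : ((1 - cdf_R g v)%:E = tl g v)%E.
Proof.
rewrite EFinB cdfE -(split_int v) addeAC subee ?add0e //; exact: int_fin.
Qed.

Lemma tl_fin v : (tl g v \is a fin_num)%E.
Proof. exact: int_fin. Qed.

Lemma cdf_nd (v w : R) : v <= w -> cdf_R g v <= cdf_R g w.
Proof.
move=> vw; rewrite -lee_fin !cdfE; apply: ge0_subset_integral => //.
- exact: measurable_funTS mg.
- by move=> *; exact: g0.
- by apply: subset_itvl; rewrite bnd_simp.
Qed.

Lemma tl_ge0 v : 0 <= 1 - cdf_R g v.
Proof. by rewrite -lee_fin tlE; apply: integral_ge0 => *; exact: g0. Qed.

Lemma tl_le1 v : 1 - cdf_R g v <= 1.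
Proof. by rewrite -lee_fin tlE; by have /andP[] := int_le1 (measurable_itv `]v, +oo[). Qed.

Lemma ig : mu.-integrable setT (EFin \o g).
Proof.
apply/integrableP; split; first exact: mg.
have -> : (fun x => `|(EFin \o g) x|%E) = (fun x => (g x)%:E).
  by apply/funext => x; rewrite /comp gee0_abs // g0.
by case: hg => _ [_ ->]; rewrite ltry.
Qed.

Lemma cdf_diff w v : w <= v ->
  ((cdf_R g v - cdf_R g w)%:E = \int[mu]_(s in `]w, v]) (g s)%:E)%E.
Proof.
move=> wv; rewrite EFinB !cdfE.
rewrite (@itv_bndbnd_setU _ _ (BInfty _ true) (BRight w) (BRight v)) ?bnd_simp //.
rewrite ge0_integral_setU //.
- rewrite addeAC subee ?add0e //; exact: int_fin.
- exact: measurable_funTS mg.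
- by move=> *; exact: g0.
- apply/disj_setPS => s [] /=; rewrite !in_itv /= => h1 /andP[h2 _].
  by move: (lt_le_trans h2 h1); rewrite ltxx.
Qed.

End Ana.

Section Dec.
Context {R : realType}.
Local Notation mu := (@lebesgue_measure R).

Lemma mT (g : R -> R) (D : set R) : density_R g -> measurable D ->
  measurable_fun D (fun v => 1 - cdf_R g v).
Proof.
move=> hg mD; apply: (@nonincreasing_measurable R D _ mD) => v w vw.
by rewrite lerD2l lerN2 cdf_nd.
Qed.

Lemma mtl (g : R -> R) (D : set R) : density_R g -> measurable D -> measurable_fun D (tl g).
Proof.
move=> hg mD.
have -> : tl g = fun v => (1 - cdf_R g v)%:E by apply/funext => v; rewrite tlE.
apply/measurable_EFinP; apply: (@nonincreasing_measurable R D _ mD) => v w vw.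
by rewrite lerD2l lerN2 cdf_nd.
Qed.

Lemma mulg_meas (g : R -> R) : density_R g -> measurable_fun [set: R] (fun s => (s * g s)%:E).
Proof.
move=> [mg _]; apply/measurable_EFinP/measurable_funM => //.
Qed.

Lemma tonelli' (g : R -> R) : density_R g ->
  (\int[mu]_(v in `]0%R, +oo[) tl g v = \int[mu]_(s in `]0%R, +oo[) (s * g s)%:E)%E.
Proof.
move=> hg; rewrite integral_itv_obnd_cbnd; last exact: mtl.
rewrite [RHS]integral_itv_obnd_cbnd; last by apply: measurable_funTS; exact: mulg_meas.
case: (hg) => mg [g0 _].
by rewrite tonelli.
Qed.

Lemma decomp (g1 g2 : R -> R) : density_R g1 -> density_R g2 -> (forall v, g2 v = g1 (- v)) ->
  mu.-integrable setT (fun s => (s * g1 s)%:E) ->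
  [/\ (\int[mu]_(v in `]0%R, +oo[) tl g1 v \is a fin_num)%E,
      (\int[mu]_(v in `]0%R, +oo[) tl g2 v \is a fin_num)%E &
      (Rintegral mu setT (fun s => s * g1 s))%:E =
      (\int[mu]_(v in `]0%R, +oo[) tl g1 v - \int[mu]_(v in `]0%R, +oo[) tl g2 v)%E].
Proof.
move=> h1 h2 e12 i1.
have m1 := mulg_meas h1.
have eqB : (\int[mu]_(v in `]0%R, +oo[) tl g2 v =
    - \int[mu]_(s in `]-oo, 0%R]) (s * g1 s)%:E)%E.
  rewrite tonelli' // integral_itv_obnd_cbnd; last by apply: measurable_funTS; exact: mulg_meas.
  under eq_integral => s _ do rewrite e12.
  case: (h1) => mg [g0 _].
  rewrite -reflect_int //.
  have -> : (\int[mu]_(s in `]-oo, 0%R]) (s * g1 s)%:E =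
      - \int[mu]_(s in `]-oo, 0%R]) ((- s) * g1 s)%:E)%E.
    rewrite -integral_ge0N; last first.
      move=> s; rewrite /= in_itv /= => s0.
      by rewrite lee_fin mulr_ge0 // oppr_ge0.
    by apply: eq_integral => s _; rewrite mulNr EFinN oppeK.
  by rewrite oppeK.
have fA : (\int[mu]_(s in `]0%R, +oo[) (s * g1 s)%:E \is a fin_num)%E.
  by apply: integrable_fin_num => //; apply: integrableS i1.
have fC : (\int[mu]_(s in `]-oo, 0%R]) (s * g1 s)%:E \is a fin_num)%E.
  by apply: integrable_fin_num => //; apply: integrableS i1.
split.
- by rewrite tonelli'.
- by rewrite eqB fin_numN.
rewrite /Rintegral fineK; last exact: integrable_fin_num.
rewrite eqB tonelli' // oppeK -(setU_rays 0) integral_setU //.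
- by rewrite addeC.
- by rewrite setU_rays.
- exact: disj_rays.
Qed.

Lemma main_ineq (g1 g2 : R -> R) : density_R g1 -> density_R g2 -> (forall v, g2 v = g1 (- v)) ->
  mu.-integrable setT (fun s => (s * g1 s)%:E) ->
  (forall v, 0 < v -> 1 - cdf_R g2 v <= 1 - cdf_R g1 v) ->
  0 <= Rintegral mu setT (fun s => s * g1 s) /\
  (Rintegral mu setT (fun s => s * g1 s) = 0 ->
     forall v, 0 < v -> 1 - cdf_R g2 v = 1 - cdf_R g1 v).
Proof.
move=> h1 h2 e12 i1 hle.
have [fA fB E] := decomp h1 h2 e12 i1.
have m0 : measurable (`]0%R, +oo[ : set R) by [].
have BA : (\int[mu]_(v in `]0%R, +oo[) tl g2 v <= \int[mu]_(v in `]0%R, +oo[) tl g1 v)%E.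
  apply: ge0_le_integral => //.
  - by move=> v _; rewrite -tlE // lee_fin tl_ge0.
  - exact: mtl.
  - exact: mtl.
  - by move=> v; rewrite /= in_itv /= andbT => v0; rewrite -!tlE // lee_fin hle.
split.
  by rewrite -lee_fin E (sube_ge0 (x := (\int[mu]_(v in `]0%R, +oo[) tl g2 v)%E)) ?fB.
move=> E0 w w0; apply/eqP; rewrite eq_le hle //= leNgt; apply/negP => lt.
set del := (1 - cdf_R g1 w) - (1 - cdf_R g2 w).
have del0 : 0 < del by rewrite subr_gt0.
have [d [d0 hd]] := integral_normr_continuous (ig h1) (divr_gt0 del0 (ltr0n _ 2)).
pose I : set R := `]w, w + d / 2[%classic.
have mI : measurable I by exact: measurable_itv.
have I0 : I `<=` `]0%R, +oo[.
  move=> v; rewrite /I /= !in_itv /= andbT => /andP[wv _].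
  exact: lt_trans wv.
have key v : I v -> (1 - cdf_R g2 v) + del / 2 <= 1 - cdf_R g1 v.
  rewrite /I /= in_itv /= => /andP[wv vd].
  have c1 : cdf_R g1 v - cdf_R g1 w < del / 2.
    have -> : cdf_R g1 v - cdf_R g1 w = fine (\int[mu]_(s in `]w, v]) (g1 s)%:E)%E.
      by rewrite -(cdf_diff h1 (ltW wv)).
    have -> : fine (\int[mu]_(s in `]w, v]) (g1 s)%:E)%E =
              Rintegral mu `]w, v] (fun s => `|g1 s|).
      rewrite /Rintegral; congr fine; apply: eq_integral => s _.
      by case: h1 => _ [g10 _]; rewrite ger0_norm.
    apply: hd => //.
    change (lebesgue_measure (`]w, v]%classic : set R) < d%:E)%E.
    rewrite lebesgue_measure_itv /= lte_fin wv -EFinD lte_fin.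
    rewrite ltrBlDr (lt_le_trans vd) //; lra.
  have c2 : cdf_R g2 w <= cdf_R g2 v by apply: cdf_nd => //; exact: ltW.
  move: c1 c2; rewrite /del; lra.
have AB : (\int[mu]_(v in `]0%R, +oo[) tl g1 v = \int[mu]_(v in `]0%R, +oo[) tl g2 v)%E.
  have : fine (\int[mu]_(v in `]0%R, +oo[) tl g1 v)%E = fine (\int[mu]_(v in `]0%R, +oo[) tl g2 v)%E.
    move: E; rewrite E0 -[X in _ = (X - _)%E](fineK fA) -[X in _ = (_ - X)%E](fineK fB) -EFinB.
    by move=> -[] /esym/eqP; rewrite subr_eq0 => /eqP.
  by move=> h; rewrite -(fineK fA) -(fineK fB) h.
have hal : (0 <= del / 2) by rewrite divr_ge0 // ltW.
have L : (\int[mu]_(v in `]0%R, +oo[) ((1 - cdf_R g2 v) + del / 2 * \1_I v)%:E <=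
          \int[mu]_(v in `]0%R, +oo[) tl g1 v)%E.
  apply: ge0_le_integral => //.
  - by move=> v _; rewrite lee_fin addr_ge0 ?tl_ge0 // mulr_ge0 // indicE.
  - apply/measurable_EFinP/measurable_funD; first exact: mT.
    by apply: measurable_funM => //; exact: measurable_indic.
  - exact: mtl.
  - move=> v; rewrite /= in_itv /= andbT => v0; rewrite -tlE // lee_fin indicE.
    case: (boolP (v \in I)) => vI.
    + by rewrite mulr1; apply: key; move: vI; rewrite inE.
    + by rewrite mulr0 addr0 hle.
have L2 : (\int[mu]_(v in `]0%R, +oo[) ((1 - cdf_R g2 v) + del / 2 * \1_I v)%:E =
          \int[mu]_(v in `]0%R, +oo[) tl g2 v + (del / 2 * (d / 2))%:E)%E.
  under eq_integral => v _ do rewrite EFinD.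
  rewrite ge0_integralD //.
  - congr (_ + _); first by apply: eq_integral => v _; rewrite tlE.
    under eq_integral => v _ do rewrite EFinM.
    rewrite ge0_integralZl //; [|exact/measurable_EFinP/measurable_indic].
    rewrite integral_indic // setIidl //.
    change ((del / 2)%:E * lebesgue_measure (`]w, (w + d / 2)%R[%classic : set R) = (del / 2 * (d / 2))%:E)%E.
    rewrite lebesgue_measure_itv /= lte_fin ltrDl divr_gt0 // -EFinM; congr (_ * _)%:E.
    by rewrite addrC addKr.
  - by move=> v _; rewrite lee_fin tl_ge0.
  - by apply/measurable_EFinP; apply: mT.
  - by move=> v _; rewrite lee_fin mulr_ge0 // indicE.
  - by apply/measurable_EFinP/measurable_funM => //; exact: measurable_indic.
move: L; rewrite L2 AB -(fineK fB) -EFinD lee_fin.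
have : 0 < del / 2 * (d / 2) by rewrite mulr_gt0 // divr_gt0.
lra.
Qed.

End Dec.

Section RL.
Context {R : realType}.
Variable r : R -> R.
Hypothesis hr : is_CF r.

Lemma r_big (t : R) : exists v, 0 < v /\ t < r v.
Proof.
case: hr => _ _ _ r0 _.
have /cvgryPgt/(_ t) h := r0.
have h2 : \forall x \near 0^'+, 0 < x /\ t < r x.
  near=> x; split; near: x; [exact: nbhs_right_gt | exact: h].
have [v [v0 hv]] := filter_ex h2.
by exists v.
Unshelve. all: by end_near.
Qed.

Lemma r_small (t a : R) : 0 < t -> exists v, a < v /\ 0 <= r v < t.
Proof.
move=> t0; case: hr => _ r0 _ _ ry.
have /cvgrPdist_lt/(_ t t0) h := ry.
have h2 : \forall x \near +oo, Num.max a 0 < x /\ `|0 - r x| < t.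
  near=> x; split; near: x; [apply: nbhs_pinfty_gt; exact: num_real | exact: h].
have [v [av hv]] := filter_ex h2.
exists v; split.
  by rewrite (le_lt_trans _ av) // le_max lexx.
have v0 : 0 < v by rewrite (le_lt_trans _ av) // le_max lexx orbT.
have rv0 := r0 v v0.
move: hv; rewrite sub0r normrN ger0_norm // => ->.
by rewrite rv0.
Unshelve. all: by end_near.
Qed.

Lemma r_cont (a b : R) : 0 < a -> {within `[a, b], continuous r}.
Proof.
move=> a0; case: hr => rc _ _ _ _.
apply: continuous_in_subspaceT => x; rewrite inE /= in_itv /= => /andP[ax _].
exact: rc (lt_le_trans a0 ax).
Qed.

Lemma r_ivt (t : R) : 0 < t -> exists v, 0 < v /\ r v = t.
Proof.
move=> t0.
have [v0 [v00 hv0]] := r_big t.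
have [v1 [v01 /andP[_ hv1]]] := r_small v0 t0.
have [c cI rc] : exists2 c, c \in `[v0, v1] & r c = t.
  apply: IVT; [exact: ltW | exact: r_cont | by rewrite ge_min le_max (ltW hv1) (ltW hv0) orbT].
exists c; split => //; move: cI; rewrite in_itv /= => /andP[h _].
exact: lt_le_trans h.
Qed.

Lemma r_big' (t b : R) : 0 < b -> exists v, [/\ 0 < v, v < b & t < r v].
Proof.
move=> b0; case: hr => _ _ _ r0 _.
have /cvgryPgt/(_ t) h := r0.
have h2 : \forall x \near 0^'+, [/\ 0 < x, x < b & t < r x].
  near=> x; split; near: x; [exact: nbhs_right_gt | exact: nbhs_right_lt | exact: h].
have [v hv] := filter_ex h2.
by exists v.
Unshelve. all: by end_near.
Qed.

Lemma r_zero (w v : R) : 0 < w -> r w = 0 -> 0 < v -> 0 < r v -> v < w.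
Proof.
move=> w0 rw0 v0 rv0; rewrite ltNge; apply/negP => wv.
have [u0 [u00 u0w hu0]] := r_big' (r v) w0.
have [c cI rc] : exists2 c, c \in `[u0, w] & r c = r v.
  apply: IVT; [exact: ltW | exact: r_cont | ].
  by rewrite ge_min le_max rw0 (ltW rv0) (ltW hu0) orbT.
move: cI; rewrite in_itv /= => /andP[uc cw].
have c0 : 0 < c := lt_le_trans u00 uc.
have cv : c < v.
  rewrite lt_neqAle (le_trans cw wv) andbT; apply/negP => /eqP cv.
  move: cw wv; rewrite cv => cw wv.
  have vw : v = w by apply/eqP; rewrite eq_le cw wv.
  by move: rv0; rewrite vw rw0 ltxx.
case: hr => _ _ rdec _ _.
have := rdec c v c0 cv; rewrite rc => /(_ rv0 rv0).
by rewrite ltxx.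
Qed.
End RL.

Section F5.
Context {R : realType}.
Local Notation mu := (@lebesgue_measure R).

Lemma cdfplus0 (f : R -> R) : cdf_Rplus f 0 = 0.
Proof. by rewrite /cdf_Rplus set_itv1 Rintegral_set1. Qed.

Lemma cdfplus_ge0 (f : R -> R) t : pos_density_Rplus f -> 0 <= cdf_Rplus f t.
Proof.
move=> [_ [f0 _]]; rewrite /cdf_Rplus; apply: Rintegral_ge0 => // x.
by rewrite /= in_itv /= => /andP[x0 _]; exact/ltW/f0.
Qed.

Lemma cdfplus_small (f : R -> R) : pos_density_Rplus f ->
  forall c, 0 < c -> exists t, 0 < t /\ cdf_Rplus f t < c.
Proof.
move=> hf c c0.
have hf' := hf; case: hf' => mf [f0 f1].
have i01 : mu.-integrable `[0%R, 1%R] (EFin \o f).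
  apply/integrableP; split; first by apply/measurable_EFinP; exact: measurable_funTS.
  apply: (@le_lt_trans _ _ (\int[mu]_(x in `[0%R, +oo[) (f x)%:E)%E); last by rewrite f1 ltry.
  apply: (@le_trans _ _ (\int[mu]_(x in `[0%R, 1%R]) (f x)%:E)%E).
    apply: ge0_le_integral => //.
    - apply/measurable_EFinP; apply: measurableT_comp => //.
      by apply/measurable_funTS.
    - by apply/measurable_EFinP; exact: measurable_funTS.
    - move=> x; rewrite /= in_itv /= => /andP[x0 _].
      by rewrite lee_fin ger0_norm // ltW // f0.
  apply: ge0_subset_integral => //.
  - by apply/measurable_EFinP; exact: measurable_funTS.
  - by move=> x; rewrite /= in_itv /= andbT => x0; rewrite lee_fin ltW // f0.
  - by apply: subset_itvl; rewrite bnd_simp.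
have := parameterized_integral_cvg_left ltr01 i01.
move=> /cvgrPdist_lt/(_ c c0) h.
case/nbhs_ballP: h => e e0 he.
have t0 : 0 < e / 2 by rewrite divr_gt0.
have ht : `|0 - parameterized_integral mu 0 (e / 2) f| < c.
  apply: he; rewrite /ball /= sub0r normrN gtr0_norm //; lra.
exists (e / 2); split => //.
move: ht; rewrite sub0r normrN => ht.
exact: le_lt_trans (ler_norm _) ht.
Qed.
End F5.

Section Final.
Context {R : realType} {X : finType} (D : rel X) (p : X -> X -> R) (f : X -> X -> R -> R).
Hypothesis hD : wf_domain D.
Hypothesis hpf : is_SCFRT D p f.
Variables (u : X -> R) (g : X -> X -> R -> R) (r : R -> R).
Hypothesis hrat : rationalizes D p f u g r.

Lemma Dsym a b : D a b -> D b a.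
Proof. by case: hD => _ [_ h]; apply: h. Qed.

Lemma Dneq a b : D a b -> a != b.
Proof. by case: hD => _ [h _]; apply: h. Qed.

Lemma ppos a b : D a b -> 0 < p a b.
Proof. by case: hpf => h _ /h []. Qed.

Lemma psum a b : D a b -> p a b + p b a = 1.
Proof. by case: hpf => h _ /h []. Qed.

Lemma rum a b : a != b -> [/\ density_R (g a b),
        (@lebesgue_measure R).-integrable setT (fun v => (v * g a b v)%:E),
        Rintegral (@lebesgue_measure R) setT (fun v => v * g a b v) = u a - u b,
        (forall v, g a b v = g b a (- v)) &
        connected (dsupport (g a b))].
Proof. by case: hrat => h _ _; apply: h. Qed.

Lemma ratE a b : D a b ->
  cdf_R (g a b) 0 = p b a /\
  (forall t v, 0 < t -> 0 < v -> r v = t ->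
     (1 - cdf_R (g a b) v) / (1 - cdf_R (g a b) 0) = cdf_Rplus (f a b) t).
Proof. by case: hrat => _ _ h; apply: h. Qed.

Lemma CF : is_CF r.
Proof. by case: hrat. Qed.

Lemma ratE' a b : D a b -> forall t v, 0 < t -> 0 < v -> r v = t ->
  (1 - cdf_R (g a b) v) / p a b = cdf_Rplus (f a b) t.
Proof.
move=> Dab t v t0 v0 rv; have [h0 h] := ratE Dab.
rewrite -(h t v) // h0; congr (_ / _).
by rewrite -(psum Dab) addrK.
Qed.

Lemma fdens a b : D a b -> pos_density_Rplus (f a b).
Proof. by case: hpf => _ h /h. Qed.

Lemma tail_le a b : D a b ->
  qFSD (p a b / p b a) (cdf_Rplus (f b a)) (cdf_Rplus (f a b)) ->
  forall v, 0 < v -> 1 - cdf_R (g b a) v <= 1 - cdf_R (g a b) v.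
Proof.
move=> Dab hq v v0.
have Dba := Dsym Dab.
have pab := ppos Dab; have pba := ppos Dba; have sab := psum Dab.
have hab := ratE' Dab; have hba := ratE' Dba.
have hdab : density_R (g a b) by case: (rum (Dneq Dab)).
have hdba : density_R (g b a) by case: (rum (Dneq Dba)).
have [rc r0 rdec _ _] := CF.
have := r0 v v0; rewrite le_eqVlt => /orP[/eqP rv0|rvp].
- apply: (@le_trans _ _ 0); last exact: tl_ge0.
  rewrite leNgt; apply/negP => cpos.
  have [t [t0 ht]] := cdfplus_small (fdens Dba) cpos.
  have [v' [v'0 rv']] := r_ivt CF t0.
  have v'v : v' < v by apply: (r_zero CF) => //; rewrite rv'.
  have e := hba t v' t0 v'0 rv'.
  have le1 : 1 - cdf_R (g b a) v <= 1 - cdf_R (g b a) v'.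
    by rewrite lerD2l lerN2; apply: cdf_nd => //; exact: ltW.
  have le2 : (1 - cdf_R (g b a) v') <= cdf_Rplus (f b a) t.
    rewrite -e ler_pdivlMr //.
    have := tl_ge0 hdba v'; move: pab sab; nra.
  by move: (le_trans le1 le2) ht; lra.
- have e1 := hab (r v) v rvp v0 erefl.
  have e2 := hba (r v) v rvp v0 erefl.
  have := hq (r v) (ltW rvp); rewrite -e1 -e2.
  have -> : p a b / p b a * ((1 - cdf_R (g a b) v) / p a b) =
            (1 - cdf_R (g a b) v) / p b a.
    by field; apply/andP; split; rewrite gt_eqF.
  by rewrite ler_pM2r // invr_gt0.
Qed.

Lemma step a b : Rrt D p f a b -> u b <= u a.
Proof.
case=> [->//|[Dab hq]].
have [hd1 i1 E1 s1 _] := rum (Dneq Dab).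
have [hd2 _ _ s2 _] := rum (Dneq (Dsym Dab)).
have [h _] := main_ineq hd1 hd2 s2 i1 (tail_le Dab hq).
by move: h; rewrite E1 subr_ge0.
Qed.

Lemma step_rev a b : Rrt D p f a b -> u a = u b -> Rrt D p f b a.
Proof.
case=> [->|[Dab hq]] eab; first by left.
right; split; first exact: Dsym.
have [hd1 i1 E1 s1 _] := rum (Dneq Dab).
have [hd2 _ _ s2 _] := rum (Dneq (Dsym Dab)).
have [_ h] := main_ineq hd1 hd2 s2 i1 (tail_le Dab hq).
have {}h := h ltac:(by rewrite E1 eab subrr).
have Dba := Dsym Dab.
have pab := ppos Dab; have pba := ppos Dba.
move=> t; rewrite le_eqVlt => /orP[/eqP <-|t0].
  by rewrite !cdfplus0 mulr0.
have [v [v0 rv]] := r_ivt CF t0.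
rewrite -(ratE' Dab t0 v0 rv) -(ratE' Dba t0 v0 rv) h //.
rewrite le_eqVlt; apply/orP; left; apply/eqP.
by field; apply/andP; split; rewrite gt_eqF.
Qed.

Lemma chain_le a b : T (Rrt D p f) a b -> u b <= u a.
Proof.
rewrite /T => h; elim: h => [x y /step //|x y z _ h1 _ h2].
exact: le_trans h2 h1.
Qed.

Lemma chain_rev a b : T (Rrt D p f) a b -> u a = u b -> T (Rrt D p f) b a.
Proof.
rewrite /T => h; elim: h => [x y hxy e|x y z hxy IH1 hyz IH2 e].
  by apply: t_step; apply: step_rev.
have l1 := chain_le hxy; have l2 := chain_le hyz.
have exy : u x = u y by apply/eqP; rewrite eq_le l1 e l2.
have eyz : u y = u z by rewrite -exy.
exact: t_trans (IH2 eyz) (IH1 exy).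
Qed.

End Final.

Theorem corollary2 (R : realType) (X : finType) (D : rel X)
  (p : X -> X -> R) (f : X -> X -> R -> R)
  (hD : wf_domain D) (hpf : is_SCFRT D p f)
  (hrat : rationalizable D p f) (x y : X) :
  (T (Rrt D p f) x y ->
     forall u g r, rationalizes D p f u g r -> u y <= u x) /\
  (TP (Rrt D p f) x y ->
     forall u g r, rationalizes D p f u g r -> u y < u x).
Proof.
split.
  by move=> hT u g r hr; exact: (chain_le hD hpf hr hT).
move=> [hT hnT] u g r hr.
rewrite lt_neqAle (chain_le hD hpf hr hT) andbT.
apply/eqP => e; apply: hnT.
exact: (chain_rev hD hpf hr hT (esym e)).
Qed.
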